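(* Let $(a_p)_{p\in\mathbb{Z}}$ be a strictly positive rapidly decreasing sequence with $a_p=a_{-p}$ and $(a_p/a_{p+1})$ bounded, and let $H$ be the associated Hilbert completion of $L^*\mathbb{C}^n$. Transport operators on $H$ to $L^{2,*}\mathbb{C}^n$ via the isometry $T:H\to L^{2,*}\mathbb{C}^n$, $Te_p=\sqrt{a_p}\,e_p$. Then the inclusion $L_{\mathrm{pol}}U_n\to\mathrm{GL}_{\mathcal{J}}(L^{2,*}\mathbb{C}^n)$, $\sum_qz^qA_q\mapsto T\big(\sum_qz^q\otimes A_q\big)T^{-1}$, is homotopic (through maps into $\mathrm{GL}_{\mathcal{J}}(L^{2,*}\mathbb{C}^n)$) to the standard inclusion $\sum_qz^qA_q\mapsto\sum_q\zeta_0^q\otimes A_q$, which factors through $LU_n$, where $\zeta_0e_p=e_{p-1}$.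
   Context: $\mathcal{S}^*$ (the dual of rapidly decreasing complex $\mathbb{Z}$-indexed sequences) is identified with $L^*\mathbb{C}$ via Fourier coefficients, with basis $e_p$; $H$ is the completion of $\mathcal{S}^*\otimes\mathbb{C}^n$ for the inner product $\sum_pb^p\overline{c^p}a_p$ tensored with the standard inner product on $\mathbb{C}^n$. On $H$, $z$ acts by $ze_p=e_{p-1}$ and a polynomial loop $\sum_qz^qA_q$ ($A_q\in M_n(\mathbb{C})$) acts by $\sum_qz^q\otimes A_q$. $L^{2,*}\mathbb{C}^n$ is the dual of $L^2\mathbb{C}^n$, identified with $\ell^2(\mathbb{Z})\otimes\mathbb{C}^n$ with orthonormal basis $e_p$. The polarising operator $J$ is $Je_p=-(-1)^{\mathrm{sign}(p)}ie_p$ (tensored with $I_n$); $\mathcal{J}$ is its class modulo Hilbert–Schmidt operators, and $\mathrm{GL}_{\mathcal{J}}$ is the group of invertible bounded operators $A$ with $[A,J]$ Hilbert–Schmidt. *)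

(* Defs.v *)
From HB Require Import structures.
From mathcomp Require Import all_boot all_order all_algebra.
From mathcomp Require Import complex.
From mathcomp Require Import all_classical all_reals all_analysis.
Set Implicit Arguments. Unset Strict Implicit. Unset Printing Implicit Defensive.
Import Order.TTheory GRing.Theory Num.Theory.
Local Open Scope classical_set_scope.
Local Open Scope ring_scope.

(* Vectors in (C^Z) (x) C^n : x p i is the coefficient of e_p (x) f_i.       *)
Definition vec (R : realType) (n : nat) := int -> 'I_n -> R[i].
Definition op (R : realType) (n : nat) := vec R n -> vec R n.

Definition absc (R : realType) (z : R[i]) : R := Normc.normc z.

Definition vadd (R : realType) (n : nat) (x y : vec R n) : vec R n := fun p i => x p i + y p i.
Definition vsub (R : realType) (n : nat) (x y : vec R n) : vec R n := fun p i => x p i - y p i.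
Definition vscale (R : realType) (n : nat) (c : R[i]) (x : vec R n) : vec R n := fun p i => c * x p i.
Definition opsub (R : realType) (n : nat) (A B : op R n) : op R n := fun x => vsub (A x) (B x).

Definition l2sq (R : realType) (n : nat) (x : vec R n) : \bar R :=
  \esum_(k in [set: int * 'I_n]) ((absc (x k.1 k.2)) ^+ 2)%:E.
Definition inl2 (R : realType) (n : nat) (x : vec R n) : Prop := (l2sq x < +oo)%E.

Definition basis R n (p : int) (i : 'I_n) : vec R n :=
  fun r j => if (r == p) && (j == i) then 1 else 0.

Definition bounded_linear (R : realType) (n : nat) (A : op R n) : Prop :=
  (forall x, inl2 x -> inl2 (A x)) /\
  (forall (c : R[i]) x y, inl2 x -> inl2 y ->
      A (vadd (vscale c x) y) = vadd (vscale c (A x)) (A y)) /\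
  (exists M : R, forall x, inl2 x -> (l2sq (A x) <= M%:E * l2sq x)%E).

Definition opnorm_sq (R : realType) (n : nat) (A : op R n) : \bar R :=
  ereal_sup [set l2sq (A x) | x in [set x | inl2 x /\ (l2sq x <= 1)%E]].
Definition hs_sq (R : realType) (n : nat) (A : op R n) : \bar R :=
  \esum_(k in [set: int * 'I_n]) l2sq (A (basis R k.1 k.2)).

Definition Jop (R : realType) (n : nat) : op R n :=
  fun x p i => (if (0 < p)%R then 'i%C else - 'i%C) * x p i.
Definition commJ (R : realType) (n : nat) (A : op R n) : op R n :=
  fun x => vsub (A (Jop x)) (Jop (A x)).

Definition GLJ (R : realType) (n : nat) (A : op R n) : Prop :=
  bounded_linear A /\
  (exists B : op R n, bounded_linear B /\
     forall x, inl2 x -> B (A x) = x /\ A (B x) = x) /\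
  (hs_sq (commJ A) < +oo)%E.

(* closeness for the topology of GL_J, given by ||A|| + ||[A,J]||_HS *)
Definition Jclose (R : realType) (n : nat) (A B : op R n) (eps : R) : Prop :=
  (opnorm_sq (opsub A B) < eps%:E)%E /\ (hs_sq (commJ (opsub A B)) < eps%:E)%E.

(* Polynomial loops: coefficient functions q |-> A_q, supported in [-N,N]. *)
Definition coeffs (R : realType) (n : nat) := int -> 'M[R[i]]_n.
Definition supported (R : realType) (n : nat) (N : nat) (A : coeffs R n) : Prop :=
  forall q : int, (N%:Z < `|q|)%R -> A q = 0.
Definition loop_eval (R : realType) (n : nat) (N : nat) (A : coeffs R n) (z : R[i]) : 'M[R[i]]_n :=
  \sum_(k < (2 * N).+1) (z ^ (k%:Z - N%:Z)) *: A (k%:Z - N%:Z).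
Definition unitary_loop (R : realType) (n : nat) (N : nat) (A : coeffs R n) : Prop :=
  forall z : R[i], absc z = 1 ->
    loop_eval N A z *m map_mx Num.conj (loop_eval N A z)^T = 1%:M.
Definition polyloop (R : realType) (n : nat) (N : nat) (A : coeffs R n) : Prop :=
  supported N A /\ unitary_loop N A.

(* z^q acting on sequences: z e_p = e_{p-1}, so (z^q x)_p = x_{p+q};
   the same formula describes zeta_0^q on L^{2,*}C^n. *)
Definition shift (R : realType) (n : nat) (q : int) (x : vec R n) : vec R n := fun p j => x (p + q) j.
Definition mxact (R : realType) (n : nat) (M : 'M[R[i]]_n) (x : vec R n) : vec R n :=
  fun p i => \sum_(j < n) M i j * x p j.
Definition loop_act (R : realType) (n : nat) (N : nat) (A : coeffs R n) : op R n :=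
  fun x p i => \sum_(k < (2 * N).+1)
                 mxact (A (k%:Z - N%:Z)) (shift (k%:Z - N%:Z) x) p i.

Definition Tmap (R : realType) (n : nat) (a : int -> R) : op R n :=
  fun x p i => (real_complex R (Num.sqrt (a p))) * x p i.
Definition Tinv (R : realType) (n : nat) (a : int -> R) : op R n :=
  fun x p i => (real_complex R (Num.sqrt (a p)))^-1 * x p i.
Definition PhiT (R : realType) (n : nat) (a : int -> R) (N : nat) (A : coeffs R n) : op R n :=
  fun x => Tmap a (loop_act N A (Tinv a x)).

Definition rapidly_decreasing (R : realType) (a : int -> R) : Prop :=
  forall k : nat, exists M : R, forall p : int, `|p|%:~R ^+ k * `|a p| <= M.

(* Main.v *)
Require Import Defs.
From HB Require Import structures.
From mathcomp Require Import all_boot all_order all_algebra.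
From mathcomp Require Import complex.
From mathcomp Require Import all_classical all_reals all_analysis.
From mathcomp Require Import ring lra zify.
Import Order.TTheory GRing.Theory Num.Theory.
Local Open Scope classical_set_scope.
Local Open Scope ring_scope.
Local Open Scope complex_scope.
Set Implicit Arguments. Unset Strict Implicit. Unset Printing Implicit Defensive.

Section Aux.
Variable R : realType.

Lemma abscE (z : R[i]) : (absc z)%:C = `|z|.
Proof. by case: z => a b; rewrite normc_def. Qed.

Lemma absc_le (y z : R[i]) : (absc y <= absc z) = (`|y| <= `|z|).
Proof. by rewrite -!abscE lecR. Qed.

Lemma absc_ler (y : R[i]) (r : R) : (absc y <= r) = (`|y| <= r%:C).
Proof. by rewrite -!abscE lecR. Qed.

Lemma absc_ge0 (z : R[i]) : 0 <= absc z.
Proof. case: z => a b; exact: sqrtr_ge0. Qed.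

Lemma abscM (y z : R[i]) : absc (y * z) = absc y * absc z.
Proof. apply/(@complexI R); by rewrite rmorphM /= !abscE normrM. Qed.

Lemma absc0 : absc (0 : R[i]) = 0.
Proof. apply/(@complexI R); by rewrite abscE normr0. Qed.

Lemma absc1 : absc (1 : R[i]) = 1.
Proof. by rewrite /absc /Normc.normc /= expr1n expr0n addr0 sqrtr1. Qed.

Lemma abscD (y z : R[i]) : absc (y + z) <= absc y + absc z.
Proof. by rewrite -lecR rmorphD /= !abscE ler_normD. Qed.

Lemma abscB (y z : R[i]) : absc (y - z) <= absc y + absc z.
Proof. by rewrite -lecR rmorphD /= !abscE ler_normB. Qed.

Lemma absc_real (r : R) : absc (r%:C) = `|r|.
Proof. apply/(@complexI R); rewrite abscE. rewrite normc_def /=. by rewrite expr0n /= addr0 sqrtr_sqr. Qed.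

Lemma absc_sum (I : Type) (s : seq I) (P : pred I) (F : I -> R[i]) :
  absc (\sum_(i <- s | P i) F i) <= \sum_(i <- s | P i) absc (F i).
Proof.
apply: (big_rec2 (fun x y => absc x <= y)); first by rewrite absc0.
move=> i x y _ h; apply: le_trans (abscD _ _) _; exact: lerD.
Qed.

Lemma CS (m : nat) (b : 'I_m -> R) :
  (\sum_(k < m) b k) ^+ 2 <= m%:R * \sum_(k < m) b k ^+ 2.
Proof.
have H2 : (0 : R) < 2 by [].
rewrite -(ler_pM2l H2) expr2 mulr_suml.
under eq_bigr do rewrite mulr_sumr.
have -> : 2 * (m%:R * \sum_(k < m) b k ^+ 2) =
   \sum_(k < m) \sum_(l < m) (b k ^+ 2 + b l ^+ 2).
  rewrite [RHS](eq_bigr (fun k => b k ^+ 2 *+ m + \sum_(l < m) b l ^+ 2)); last first.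
    by move=> k _; rewrite big_split /= sumr_const card_ord.
  rewrite big_split /= sumr_const card_ord sumrMnl.
  by rewrite !mulr_natl mulr2n.
rewrite mulr_sumr; apply: ler_sum => k _; rewrite mulr_sumr; apply: ler_sum => l _.
rewrite -subr_ge0 (_ : _ - _ = (b k - b l) ^+ 2) ?sqr_ge0 //.
by rewrite sqrrB; ring.
Qed.

End Aux.


Section Esum.
Variable R : realType.
Local Open Scope ereal_scope.

Lemma esum_finT (T : finType) (g : T -> \bar R) :
  (forall i, 0 <= g i) -> \esum_(i in [set: T]) g i = \sum_(i : T) g i.
Proof.
move=> g0; rewrite esum_fset; last 2 first.
- exact: finite_finset.
- by move=> i _; apply: g0.
rewrite (fsbigE (enum T)) ?enum_uniq //.
- under eq_bigl do rewrite in_setT.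
  by rewrite big_enum.
- by move=> i _; rewrite mem_enum.
Qed.

Lemma esum_pair (n : nat) (f : int * 'I_n -> \bar R) :
  (forall k, 0 <= f k) ->
  \esum_(k in [set: int * 'I_n]) f k = \esum_(p in [set: int]) \sum_(i < n) f (p, i).
Proof.
move=> f0.
rewrite (eq_esum (b := fun p => \esum_(i in [set: 'I_n]) f (p, i))); last first.
  by move=> p _; rewrite esum_finT.
rewrite esum_esum //.
have -> : [set: int] `*`` (fun _ => [set: 'I_n]) = [set: int * 'I_n].
  by apply/seteqP; split => [[p i]|[p i]].
by apply: eq_esum => -[p i].
Qed.

Lemma esum_scale (T : choiceType) (I : set T) (c : R) (f : T -> R) :
  (0 <= c)%R -> (forall i, 0 <= f i)%R ->
  \esum_(i in I) (c * f i)%:E <= c%:E * \esum_(i in I) (f i)%:E.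
Proof.
move=> c0 f0; apply: ge_ereal_sup => _ [X [finX XI] <-].
rewrite fsumEFin // -mulr_fsumr EFinM.
apply: lee_wpmul2l; first by rewrite lee_fin.
rewrite -fsumEFin //; apply: ereal_sup_ubound; by exists X.
Qed.

Lemma esum_shift (f : int -> \bar R) (s : int) :
  \esum_(p in [set: int]) f (p + s)%R = \esum_(p in [set: int]) f p.
Proof.
symmetry; apply: (@reindex_esum R int int setT setT (fun p => (p + s)%R)).
rewrite setTT_bijective; exists (fun p => (p - s)%R) => p; [exact: addrK | exact: subrK].
Qed.

Lemma esum_window (L : nat) (f : int -> \bar R) :
  (forall r, 0 <= f r) -> (forall r : int, (L%:Z < `|r|)%R -> f r = 0) ->
  \esum_(r in [set: int]) f r = \sum_(k < (2 * L).+1) f (k%:Z - L%:Z)%R.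
Proof.
move=> f0 fL.
pose e := fun k : 'I_(2 * L).+1 => (k%:Z - L%:Z)%R.
rewrite (esumID (e @` [set: 'I_(2 * L).+1])) //.
rewrite [X in _ + X]esum1 ?adde0; last first.
  move=> r [_ /=] hr; apply: fL.
  rewrite ltNge; apply/negP => hr'; apply: hr.
  have h1 : (0 <= r + L%:Z)%R by move: hr'; rewrite ler_norml; lra.
  have h2 : (r + L%:Z <= (2 * L)%:Z)%R by move: hr'; rewrite ler_norml PoszM; lra.
  have [k hk] : exists k : nat, (r + L%:Z)%R = k%:Z.
    by exists (absz (r + L%:Z)%R); rewrite gez0_abs.
  have hk' : (k < (2 * L).+1)%N by rewrite ltnS -lez_nat -hk.
  exists (Ordinal hk') => //; rewrite /e /= -hk; lra.
rewrite setTI esum_image; last by move=> i j _ _; rewrite /e => /addIr /eqP; rewrite eqz_nat => /eqP /val_inj.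
by rewrite esum_finT.
Qed.

End Esum.


Section Ops.
Variables (R : realType) (n : nat).

Definition Kop (m : nat) (s : 'I_m -> int) (W : 'I_m -> int -> 'I_n -> 'I_n -> R[i]) : op R n :=
  fun x p i => \sum_(k < m) \sum_(j < n) W k p i j * x (p + s k) j.

Definition rowsq (x : vec R n) (p : int) : R := \sum_(i < n) absc (x p i) ^+ 2.

Lemma rowsq_ge0 x p : 0 <= rowsq x p.
Proof. by apply: sumr_ge0 => i _; apply: sqr_ge0. Qed.

Lemma l2sqE (x : vec R n) : l2sq x = \esum_(p in [set: int]) (rowsq x p)%:E.
Proof.
rewrite /l2sq esum_pair; last by move=> k; rewrite lee_fin sqr_ge0.
by apply: eq_esum => p _; rewrite sumEFin.
Qed.

Lemma l2sq_ge0 (x : vec R n) : (0 <= l2sq x)%E.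
Proof. by apply: esum_ge0 => k _; rewrite lee_fin sqr_ge0. Qed.

Lemma inl2E (x : vec R n) : inl2 x -> l2sq x = (fine (l2sq x))%:E.
Proof. by move=> h; rewrite fineK // ge0_fin_numE // l2sq_ge0. Qed.

Definition Kc (m : nat) (C : R) : R := (m * n)%:R ^+ 2 * C ^+ 2.

Lemma Kc_ge0 m C : 0 <= Kc m C.
Proof. by rewrite /Kc mulr_ge0 // sqr_ge0. Qed.

Lemma Kop_pt (m : nat) (s : 'I_m -> int) W (C : R) x p i :
  0 <= C -> (forall k p i j, absc (W k p i j) <= C) ->
  absc (Kop s W x p i) ^+ 2 <= (m * n)%:R * C ^+ 2 * \sum_(k < m) rowsq x (p + s k).
Proof.
move=> C0 WC.
have h1 : absc (Kop s W x p i) <= \sum_(k < m) (C * \sum_(j < n) absc (x (p + s k) j)).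
  apply: le_trans (absc_sum _ _ _) _; apply: ler_sum => k _.
  apply: le_trans (absc_sum _ _ _) _; rewrite mulr_sumr; apply: ler_sum => j _.
  by rewrite abscM ler_wpM2r ?absc_ge0.
apply: le_trans (_ : (\sum_(k < m) (C * \sum_(j < n) absc (x (p + s k) j))) ^+ 2 <= _).
  by rewrite lerXn2r // ?nnegrE ?absc_ge0 // sumr_ge0 // => k _; rewrite mulr_ge0 // sumr_ge0 // => j _; apply: absc_ge0.
apply: le_trans (CS _) _.
rewrite natrM -mulrA -mulrA ler_wpM2l //.
rewrite !mulr_sumr; apply: ler_sum => k _.
rewrite exprMn [X in _ <= X]mulrCA ler_wpM2l ?sqr_ge0 //; rewrite /rowsq.
by apply: le_trans (CS _) _; apply: ler_wpM2l => //; apply: ler_sum => j _; rewrite ?sqr_ge0.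
Qed.


Lemma Kop_bound (m : nat) (s : 'I_m -> int) W (C : R) x :
  0 <= C -> (forall k p i j, absc (W k p i j) <= C) -> inl2 x ->
  (l2sq (Kop s W x) <= (Kc m C)%:E * l2sq x)%E.
Proof.
move=> C0 WC hx; rewrite (inl2E hx); set X := fine (l2sq x).
have hX : (\esum_(p in [set: int]) (rowsq x p)%:E)%E = X%:E by rewrite -l2sqE -inl2E.
set c := (m * n)%:R * C ^+ 2 * n%:R.
have c0 : 0 <= c by rewrite /c !mulr_ge0 // sqr_ge0.
rewrite l2sqE.
apply: le_trans (_ : (\esum_(p in [set: int]) (c * \sum_(k < m) rowsq x (p + s k))%:E <= _)%E).
  apply: le_esum => p _; rewrite lee_fin {1}/rowsq.
  apply: le_trans (_ : \sum_(i < n) ((m * n)%:R * C ^+ 2 * \sum_(k < m) rowsq x (p + s k)) <= _).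
    by apply: ler_sum => i _; apply: Kop_pt.
  by rewrite sumr_const card_ord -[X in X <= _]mulr_natr /c mulrAC.
apply: le_trans (esum_scale [set: int] c0 _) _.
  by move=> p; apply: sumr_ge0 => k _; apply: rowsq_ge0.
rewrite (eq_esum (b := fun p => \sum_(k < m) (rowsq x (p + s k))%:E)%E); last first.
  by move=> p _; rewrite sumEFin.
rewrite esum_sum; last by move=> p k _ _; rewrite lee_fin rowsq_ge0.
rewrite (eq_bigr (fun _ => X%:E)); last first.
  by move=> k _; rewrite (esum_shift (fun p => (rowsq x p)%:E)) hX.
rewrite sumEFin sumr_const card_ord -EFinM -EFinM lee_fin.
rewrite le_eqVlt; apply/orP; left; apply/eqP.
by rewrite /Kc /c -mulr_natr !natrM; ring.
Qed.

Lemma Kop_inl2 (m : nat) (s : 'I_m -> int) W (C : R) x :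
  0 <= C -> (forall k p i j, absc (W k p i j) <= C) -> inl2 x -> inl2 (Kop s W x).
Proof.
move=> C0 WC hx; rewrite /inl2; apply: le_lt_trans (@Kop_bound m s W C x C0 WC hx) _.
by rewrite (inl2E hx) -EFinM ltry.
Qed.

Lemma Kop_linear (m : nat) (s : 'I_m -> int) W (c : R[i]) x y :
  Kop s W (vadd (vscale c x) y) = vadd (vscale c (Kop s W x)) (Kop s W y).
Proof.
apply/funext => p; apply/funext => i; rewrite /Kop /vadd /vscale.
rewrite mulr_sumr -big_split /=; apply: eq_bigr => k _.
rewrite mulr_sumr -big_split /=; apply: eq_bigr => j _.
by rewrite mulrDr mulrCA.
Qed.

Lemma Kop_bl (m : nat) (s : 'I_m -> int) W (C : R) :
  0 <= C -> (forall k p i j, absc (W k p i j) <= C) -> bounded_linear (Kop s W).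
Proof.
move=> C0 WC; split; first by move=> x; apply: (@Kop_inl2 m s W C x C0 WC).
split; first by move=> c x y _ _; apply: Kop_linear.
by exists (Kc m C) => x hx; apply: (@Kop_bound m s W C x C0 WC hx).
Qed.

Lemma Kop_opnorm (m : nat) (s : 'I_m -> int) W (C : R) :
  0 <= C -> (forall k p i j, absc (W k p i j) <= C) ->
  (opnorm_sq (Kop s W) <= (Kc m C)%:E)%E.
Proof.
move=> C0 WC; apply: ge_ereal_sup => _ [x [hx hx1] <-].
apply: le_trans (@Kop_bound m s W C x C0 WC hx) _.
rewrite -[X in (_ <= X)%E]mule1; apply: lee_wpmul2l => //.
by rewrite lee_fin Kc_ge0.
Qed.

Lemma Kop_sub (m : nat) (s : 'I_m -> int) W1 W2 :
  opsub (Kop s W1) (Kop s W2) = Kop s (fun k p i j => W1 k p i j - W2 k p i j).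
Proof.
apply/funext => x; apply/funext => p; apply/funext => i; rewrite /opsub /vsub /Kop.
rewrite -sumrB; apply: eq_bigr => k _; rewrite -sumrB; apply: eq_bigr => j _.
by rewrite mulrBl.
Qed.

Definition jsg (p : int) : R[i] := if (0 < p)%R then 'i%C else - 'i%C.

Lemma commJ_Kop (m : nat) (s : 'I_m -> int) W :
  commJ (Kop s W) = Kop s (fun k p i j => W k p i j * (jsg (p + s k) - jsg p)).
Proof.
apply/funext => x; apply/funext => p; apply/funext => i; rewrite /commJ /vsub /Kop /Jop.
rewrite mulr_sumr -sumrB; apply: eq_bigr => k _.
rewrite mulr_sumr -sumrB; apply: eq_bigr => j _.
rewrite mulrBr mulrBl; congr (_ - _); [by rewrite mulrA | by rewrite mulrCA mulrA].
Qed.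


Lemma rowsq_basis r l p : rowsq (@Defs.basis R n r l) p = if p == r then 1 else 0.
Proof.
rewrite /rowsq /Defs.basis; case: (p == r).
- transitivity (\sum_(i < n) (if i == l then 1 else 0 : R)).
    apply: eq_bigr => i _; case: (i == l).
      by rewrite -(expr1n R 2); apply: (f_equal (fun z : R => z ^+ 2)); apply: absc1.
    rewrite [RHS](_ : _ = (0 : R) ^+ 2); last by rewrite expr0n.
    by apply: (f_equal (fun z : R => z ^+ 2)); apply: absc0.
  by rewrite -big_mkcond big_pred1_eq.
- by rewrite big1 // => i _; rewrite absc0 expr0n.
Qed.

Lemma l2sq_basis r l : l2sq (@Defs.basis R n r l) = 1%E.
Proof.
rewrite l2sqE (esumID [set r]); last by move=> p _; rewrite lee_fin rowsq_ge0.
rewrite setTI esum_set1; last by rewrite lee_fin rowsq_ge0.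
rewrite rowsq_basis eqxx esum1 ?adde0 // => p [_ hp].
by rewrite rowsq_basis; case: eqP.
Qed.

Lemma inl2_basis r l : inl2 (@Defs.basis R n r l).
Proof. by rewrite /inl2 l2sq_basis ltry. Qed.

Lemma l2sq0 : l2sq (fun (_ : int) (_ : 'I_n) => (0 : R[i])) = 0%E.
Proof. by rewrite /l2sq esum1 // => k _; rewrite absc0 expr0n. Qed.

Lemma Kop_hs (m : nat) (s : 'I_m -> int) W (C : R) (L : nat) :
  0 <= C -> (forall k p i j, absc (W k p i j) <= C) ->
  (forall k p i j, (L%:Z < `|p + s k|)%R -> W k p i j = 0) ->
  (hs_sq (Kop s W) <= ((Kc m C *+ n) *+ (2 * L).+1)%:E)%E.
Proof.
move=> C0 WC WL.
rewrite /hs_sq esum_pair; last by move=> k; apply: l2sq_ge0.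
apply: le_trans (_ : (\esum_(r in [set: int]) (if (`|r| <= L%:Z)%R then (Kc m C *+ n) else 0)%:E <= _)%E).
  apply: le_esum => r _; case: ifP => hr.
  - apply: le_trans (_ : (\sum_(l < n) (Kc m C)%:E <= _)%E).
      apply: lee_sum => l _.
      apply: le_trans (@Kop_bound m s W C _ C0 WC (inl2_basis r l)) _.
      by rewrite l2sq_basis mule1.
    by rewrite sumEFin sumr_const card_ord.
  - rewrite big1 // => l _.
    have -> : Kop s W (@Defs.basis R n r l) = (fun (_ : int) (_ : 'I_n) => (0 : R[i])).
      apply/funext => p; apply/funext => i; rewrite /Kop big1 // => k _.
      rewrite big1 // => j _; rewrite /Defs.basis; case: ifP => [/andP [/eqP e _]|_]; last by rewrite mulr0.
      by rewrite WL ?mul0r // e ltNge hr.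
    exact: l2sq0.
rewrite (@esum_window R L); first last.
- by move=> r hr; case: ifP => // h; move: hr; rewrite ltNge h.
- by move=> r; case: ifP => _; rewrite lee_fin ?mulrn_wge0 ?Kc_ge0.
apply: le_trans (_ : (\sum_(k < (2 * L).+1) (Kc m C *+ n)%:E <= _)%E).
  by apply: lee_sum => k _; case: ifP => _; rewrite lee_fin ?mulrn_wge0 ?Kc_ge0.
by rewrite sumEFin sumr_const card_ord.
Qed.

End Ops.


Section J.
Variables (R : realType) (n : nat).

Lemma absc_jsg p : absc (jsg R p) = 1.
Proof.
rewrite /jsg; case: ifP => _; rewrite /absc /Normc.normc /=.
  by rewrite expr0n expr1n add0r sqrtr1.
by rewrite oppr0 expr0n sqrrN expr1n add0r sqrtr1.
Qed.

Lemma Kop_hsJ (m N : nat) (s : 'I_m -> int) W (C : R) :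
  0 <= C -> (forall k p i j, absc (W k p i j) <= C) ->
  (forall k, (`|s k| <= N%:Z)%R) ->
  (hs_sq (commJ (@Kop R n m s W)) <= ((Kc n m (C * 2) *+ n) *+ (2 * (2 * N)).+1)%:E)%E.
Proof.
move=> C0 WC sN; rewrite commJ_Kop; apply: Kop_hs.
- by rewrite mulr_ge0.
- move=> k p i j; rewrite abscM ler_pM ?absc_ge0 //.
  by apply: le_trans (abscB _ _) _; rewrite !absc_jsg.
- move=> k p i j hp; rewrite /jsg.
  have := sN k; move: hp; rewrite !PoszM.
  case: (ltP 0 (p + s k)); case: (ltP 0 p) => //; rewrite ?subrr ?mulr0 //; lia.
Qed.

End J.

Section Weights.
Variables (R : realType) (a : int -> R) (M : R).
Hypothesis apos : forall p, 0 < a p.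
Hypothesis asym : forall p, a (- p) = a p.
Hypothesis hM : forall p, a p / a (p + 1) <= M.

Definition wt (t : R) (p : int) : R := expR ((1 - t) / 2 * ln (a p)).
Definition lam : R := ln (Num.max M 1).
Definition rho (t : R) (p q : int) : R := wt t p / wt t (p + q).

Lemma wt_gt0 t p : 0 < wt t p.
Proof. exact: expR_gt0. Qed.

Lemma lam_ge0 : 0 <= lam.
Proof. by rewrite /lam ln_ge0 // le_max lexx orbT. Qed.

Lemma lnB (x y : R) : 0 < x -> 0 < y -> ln x - ln y = ln (x / y).
Proof.
move=> x0 y0; rewrite lnM ?posrE ?invr_gt0 // lnV ?posrE //.
Qed.

Lemma ln_step p : `|ln (a p) - ln (a (p + 1))| <= lam.
Proof.
rewrite ler_norml; apply/andP; split.
  rewrite lerNl opprB lnB // /lam ler_ln ?posrE ?divr_gt0 ?lt_max ?ltr01 ?orbT //.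
  rewrite -(asym p) -(asym (p + 1)) (_ : - p = - (p + 1) + 1); last by ring.
  by apply: le_trans (hM _) _; rewrite le_max lexx.
rewrite lnB // /lam ler_ln ?posrE ?divr_gt0 ?lt_max ?ltr01 ?orbT //.
by apply: le_trans (hM _) _; rewrite le_max lexx.
Qed.

Lemma ln_dist_nat (k : nat) p : `|ln (a p) - ln (a (p + k%:Z))| <= k%:R * lam.
Proof.
elim: k => [|k IH]; first by rewrite addr0 subrr normr0 mul0r.
rewrite (_ : ln (a p) - ln (a (p + k.+1%:Z)) =
  (ln (a p) - ln (a (p + k%:Z))) + (ln (a (p + k%:Z)) - ln (a (p + k%:Z + 1)))); last first.
  rewrite -addrA (_ : p + k%:Z + 1 = p + k.+1%:Z); first by ring.
  by rewrite -addrA -PoszD addn1.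
apply: le_trans (ler_normD _ _) _.
by rewrite -nat1r mulrDl mul1r addrC lerD // ln_step.
Qed.

Lemma ln_dist (N : nat) p q : (`|q| <= N%:Z)%R ->
  `|ln (a p) - ln (a (p + q))| <= N%:R * lam.
Proof.
case: q => k hq.
  apply: le_trans (ln_dist_nat k p) _; rewrite ler_wpM2r ?lam_ge0 // ler_nat.
  by move: hq; rewrite lez_nat.
have e : p = (p + Negz k) + k.+1%:Z by rewrite NegzE; ring.
rewrite distrC; set p' := p + Negz k; rewrite [X in `|_ - ln (a X)|]e.
apply: le_trans (ln_dist_nat k.+1 _) _.
rewrite ler_wpM2r ?lam_ge0 // ler_nat.
by move: hq; rewrite NegzE normrN lez_nat.
Qed.

Lemma rhoE t p q : rho t p q = expR ((1 - t) / 2 * (ln (a p) - ln (a (p + q)))).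
Proof. by rewrite /rho /wt -expRN -expRD; congr expR; ring. Qed.

Lemma rho_gt0 t p q : 0 < rho t p q.
Proof. by rewrite rhoE expR_gt0. Qed.

Lemma cbound (t : R) (l D : R) : 0 <= t <= 1 -> `|l| <= D -> `|(1 - t) / 2 * l| <= D.
Proof.
move=> /andP [t0 t1] hl; rewrite normrM; apply: le_trans hl.
rewrite ler_piMl ?normr_ge0 // ger0_norm; first lra.
by apply: divr_ge0; lra.
Qed.

Lemma rho_le (N : nat) t p q : 0 <= t <= 1 -> (`|q| <= N%:Z)%R ->
  rho t p q <= expR (N%:R * lam).
Proof.
move=> ht hq; rewrite rhoE ler_expR; apply: le_trans (ler_norm _) _.
exact: cbound (ln_dist p hq).
Qed.

Lemma expR_lip (D u v : R) : `|u| <= D -> `|v| <= D ->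
  `|expR u - expR v| <= expR D * `|u - v|.
Proof.
wlog: u v / u <= v => [hw hu hv|uv hu hv].
  case: (leP u v) => h; first exact: hw.
  by rewrite distrC (distrC u); apply: hw => //; apply: ltW.
have d0 : 0 <= v - u by lra.
have e1 := expR_ge1Dx (- (v - u)); rewrite expRN in e1.
have ep := expR_gt0 (v - u).
have key : expR (v - u) - 1 <= (v - u) * expR (v - u).
  have : (1 - (v - u)) * expR (v - u) <= 1.
    by apply: le_trans (ler_wpM2r (ltW ep) e1) _; rewrite mulVf ?lt0r_neq0.
  lra.
have hv' : expR v = expR u * expR (v - u) by rewrite -expRD; congr expR; ring.
rewrite distrC ger0_norm; last by rewrite subr_ge0 ler_expR.
rewrite distrC ger0_norm // hv'.
have eD : expR v <= expR D by rewrite ler_expR; move: hv; rewrite ler_norml => /andP [].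
have eu := expR_gt0 u.
apply: le_trans (_ : expR v * (v - u) <= _); last by rewrite ler_wpM2r.
rewrite hv' -[X in _ - X <= _]mulr1 -mulrBr -mulrA ler_pM2l //.
by rewrite mulrC.
Qed.


Lemma rho_lip (N : nat) t t0 p q : 0 <= t <= 1 -> 0 <= t0 <= 1 -> (`|q| <= N%:Z)%R ->
  `|rho t p q - rho t0 p q| <= expR (N%:R * lam) * (N%:R * lam * `|t - t0|).
Proof.
move=> ht ht0 hq; rewrite !rhoE.
have hl := ln_dist p hq.
apply: le_trans (expR_lip (cbound ht hl) (cbound ht0 hl)) _.
rewrite ler_wpM2l ?expR_ge0 //.
rewrite -mulrBl (_ : (1 - t) / 2 - (1 - t0) / 2 = (t0 - t) / 2); last by ring.
rewrite normrM [X in _ <= X]mulrC ler_pM ?normr_ge0 //.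
rewrite normrM distrC ger0_norm; last by rewrite invr_ge0.
rewrite ler_piMr ?normr_ge0 //; lra.
Qed.

Lemma wt0 p : wt 0 p = Num.sqrt (a p).
Proof.
have e : a p = wt 0 p ^+ 2.
  rewrite /wt expr2 -expRD (_ : (1 - 0) / 2 * ln (a p) + (1 - 0) / 2 * ln (a p) = ln (a p)); last by field.
  by rewrite lnK ?posrE.
by rewrite e sqrtr_sqr ger0_norm // ltW // wt_gt0.
Qed.

Lemma wt1 p : wt 1 p = 1.
Proof. by rewrite /wt subrr mul0r mul0r expR0. Qed.

End Weights.


Section Laurent.
Variable R : realType.

Definition zpt (m : nat) : R[i] :=
  ((1 - m%:R ^+ 2) / (1 + m%:R ^+ 2)) +i* (2 * m%:R / (1 + m%:R ^+ 2)).

Lemma zpt_unit m : absc (zpt m) = 1.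
Proof.
rewrite /absc /Normc.normc /zpt.
have h : (1 + (m%:R : R) ^+ 2) != 0 by rewrite lt0r_neq0 // ltr_pwDl // sqr_ge0.
rewrite (_ : _ + _ = 1) ?sqrtr1 //.
by field.
Qed.

Lemma zpt_inj : injective zpt.
Proof.
move=> m m' [] h _.
have h1 : (1 + (m%:R : R) ^+ 2) != 0 by rewrite lt0r_neq0 // ltr_pwDl // sqr_ge0.
have h2 : (1 + (m'%:R : R) ^+ 2) != 0 by rewrite lt0r_neq0 // ltr_pwDl // sqr_ge0.
move/eqP: h; rewrite eqr_div // => /eqP h.
have : (m%:R : R) ^+ 2 = m'%:R ^+ 2 by lra.
move/eqP; rewrite eqrXn2 // => /eqP.
by move/eqP; rewrite eqr_nat => /eqP.
Qed.

Lemma laurent_poly (K : nat) (e : nat -> R[i]) :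
  (forall z : R[i], absc z = 1 -> \sum_(r < K) e r * z ^+ r = 0) ->
  forall r, (r < K)%N -> e r = 0.
Proof.
move=> hz r hr.
pose P := \poly_(r < K) e r.
suff P0 : P = 0.
  by have := congr1 (fun p : {poly R[i]} => p`_r) P0; rewrite coef_poly hr coef0.
apply/eqP; apply: contraT => hP.
have := max_poly_roots hP (rs := map zpt (iota 0 K)).
rewrite size_map size_iota.
have -> : uniq (map zpt (iota 0 K)) by rewrite map_inj_uniq ?iota_uniq //; exact: zpt_inj.
have -> : all (root P) (map zpt (iota 0 K)).
  by apply/allP => z /mapP [m _ ->]; rewrite /root horner_poly hz // zpt_unit.
move=> /(_ isT isT); rewrite ltnNge.
by rewrite size_poly.
Qed.

End Laurent.

Definition qk (N : nat) (k : 'I_(2 * N).+1) : int := k%:Z - N%:Z.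

Lemma qk_bound N (k : 'I_(2 * N).+1) : (`|qk k| <= N%:Z)%R.
Proof. have := ltn_ord k; rewrite /qk ler_norml; lia. Qed.

Lemma qk_diff N (k k' : 'I_(2 * N).+1) :
  qk k - qk k' = (k + 2 * N - k')%N%:Z - (2 * N)%N%:Z.
Proof. have := ltn_ord k'; have := ltn_ord k; rewrite /qk; lia. Qed.

Lemma sum_delta (V : zmodType) (K j : nat) (f : nat -> V) : (j < K)%N ->
  \sum_(r < K) (if (nat_of_ord r == j)%N then f r else 0) = f j.
Proof.
move=> hj; rewrite (bigD1 (Ordinal hj)) //= eqxx big1 ?addr0 // => r hr.
rewrite ifF //; apply/negbTE; move: hr; apply: contra => /eqP e.
by apply/eqP/val_inj.
Qed.

Lemma regroup (N : nat) (V : zmodType) (F : 'I_(2 * N).+1 -> 'I_(2 * N).+1 -> V) :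
  \sum_(k < (2 * N).+1) \sum_(k' < (2 * N).+1) F k k' =
  \sum_(r < (2 * (2 * N)).+1) \sum_(k < (2 * N).+1) \sum_(k' < (2 * N).+1)
     (if (k + 2 * N - k' == r)%N then F k k' else 0).
Proof.
symmetry; rewrite exchange_big /=; apply: eq_bigr => k _.
rewrite exchange_big /=; apply: eq_bigr => k' _.
have hd : (k + 2 * N - k' < (2 * (2 * N)).+1)%N.
  by have := ltn_ord k; have := ltn_ord k'; lia.
rewrite (bigD1 (Ordinal hd)) //= eqxx big1 ?addr0 // => r hr.
rewrite ifF //; apply/negbTE; move: hr; apply: contra => /eqP e.
by apply/eqP/val_inj; rewrite /= e.
Qed.

Section LaurentB.
Variable R : realType.

Lemma regroup_sub (N : nat) (F : 'I_(2 * N).+1 -> 'I_(2 * N).+1 -> R[i]) (G : int -> R[i]) :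
  \sum_(k < (2 * N).+1) \sum_(k' < (2 * N).+1) F k k' * G (qk k - qk k') =
  \sum_(r < (2 * (2 * N)).+1)
     (\sum_(k < (2 * N).+1) \sum_(k' < (2 * N).+1)
        (if (k + 2 * N - k' == r)%N then F k k' else 0)) * G (r%:Z - (2 * N)%N%:Z).
Proof.
rewrite regroup; apply: eq_bigr => r _; rewrite mulr_suml; apply: eq_bigr => k _.
rewrite mulr_suml; apply: eq_bigr => k' _.
by case: eqP => [<-|_]; [rewrite qk_diff | rewrite mul0r].
Qed.

Lemma laurent (N : nat) (c : 'I_(2 * N).+1 -> 'I_(2 * N).+1 -> R[i]) (d : R[i]) :
  (forall z : R[i], absc z = 1 ->
     \sum_(k < (2 * N).+1) \sum_(k' < (2 * N).+1) c k k' * z ^ (qk k - qk k') = d) ->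
  forall (y : int -> R[i]) (p : int),
     \sum_(k < (2 * N).+1) \sum_(k' < (2 * N).+1) c k k' * y (p + (qk k - qk k')) = d * y p.
Proof.
move=> hz y p.
pose D (r : nat) := \sum_(k < (2 * N).+1) \sum_(k' < (2 * N).+1)
        (if (k + 2 * N - k' == r)%N then c k k' else 0).
have h2N : (2 * N < (2 * (2 * N)).+1)%N by lia.
have hD : forall r, (r < (2 * (2 * N)).+1)%N -> D r = if (r == 2 * N)%N then d else 0.
  move=> r hr; apply/eqP; rewrite -subr_eq0; apply/eqP; move: r hr.
  apply: (laurent_poly (e := fun r => D r - (if (r == 2 * N)%N then d else 0))).
  move=> z hz1.
  have z0 : z != 0 by apply/eqP => e; move: hz1; rewrite e absc0 => /esym/eqP; rewrite oner_eq0.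
  have := hz z hz1; rewrite regroup_sub -/D => hs.
  under eq_bigr do rewrite mulrBl.
  rewrite sumrB.
  have -> : \sum_(i < (2 * (2 * N)).+1) (if (nat_of_ord i == 2 * N)%N then d else 0) * z ^+ i = d * z ^+ (2 * N).
    rewrite -(sum_delta (fun r => d * z ^+ r) h2N); apply: eq_bigr => r _.
    by case: eqP => _; rewrite ?mul0r.
  rewrite -hs mulr_suml; apply/eqP; rewrite subr_eq0; apply/eqP; apply: eq_bigr => r _.
  rewrite -mulrA; congr (_ * _).
  by rewrite exprnP [X in _ = _ * X]exprnP -expfzDr // subrK.
rewrite (regroup_sub c (fun e => y (p + e))).
rewrite (eq_bigr (fun r : 'I_(2 * (2 * N)).+1 => if (nat_of_ord r == 2 * N)%N then d * y p else 0)); last first.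
  move=> r _; rewrite -/(D r) hD //; case: eqP => [->|_]; last by rewrite mul0r.
  by rewrite subrr addr0.
by rewrite (sum_delta (fun _ => d * y p) h2N).
Qed.

End LaurentB.


Section Unit.
Variables (R : realType) (n : nat).

Definition adjA (A : coeffs R n) : coeffs R n :=
  fun q => \matrix_(i, j) Num.conj (A (- q) j i).

Lemma conj_expz (z : R[i]) (q : int) : Num.conj (z ^ q) = Num.conj z ^ q.
Proof.
case: q => m /=; first by rewrite rmorphXn.
by rewrite fmorphV rmorphXn.
Qed.

Lemma conj_unit (z : R[i]) : absc z = 1 -> Num.conj z = z^-1.
Proof.
move=> h; rewrite invC_norm -abscE h.
by rewrite (_ : (1 : R)%:C = 1) // expr1n invr1 mul1r.
Qed.

Lemma qk_rev N (k : 'I_(2 * N).+1) : qk (rev_ord k) = - qk k.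
Proof. have := ltn_ord k; rewrite /qk /=; lia. Qed.

Lemma laE N (A : coeffs R n) x p i :
  loop_act N A x p i = \sum_(k < (2 * N).+1) \sum_(j < n) A (qk k) i j * x (p + qk k) j.
Proof. by []. Qed.

End Unit.

Section Unit2.
Variables (R : realType) (n : nat).

Lemma unit_ne0 (z : R[i]) : absc z = 1 -> z != 0.
Proof. by move=> hz1; apply/eqP => e; move: hz1; rewrite e absc0 => /esym/eqP; rewrite oner_eq0. Qed.

Lemma loop_evalE N (A : coeffs R n) z i j :
  loop_eval N A z i j = \sum_(k < (2 * N).+1) z ^ (qk k) * A (qk k) i j.
Proof. by rewrite /loop_eval summxE; apply: eq_bigr => k _; rewrite mxE. Qed.

Lemma unitH N (A : coeffs R n) : unitary_loop N A ->
  forall i j (z : R[i]), absc z = 1 ->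
  \sum_(k < (2 * N).+1) \sum_(k' < (2 * N).+1)
     (\sum_(l < n) A (qk k) i l * Num.conj (A (qk k') j l)) * z ^ (qk k - qk k') = (i == j)%:R.
Proof.
move=> hu i j z hz.
have := congr1 (fun M : 'M[R[i]]_n => M i j) (hu z hz).
rewrite !mxE => <-.
have z0 := unit_ne0 hz.
symmetry.
under eq_bigr do rewrite !mxE !loop_evalE rmorph_sum mulr_suml.
rewrite exchange_big /=; apply: eq_bigr => k _.
under eq_bigr do rewrite mulr_sumr.
rewrite exchange_big /=; apply: eq_bigr => k' _.
rewrite mulr_suml; apply: eq_bigr => l _.
rewrite rmorphM /= conj_expz conj_unit // exprz_inv (expfzDr (qk k) (- qk k') z0).
ring.
Qed.

Lemma unitH' N (A : coeffs R n) : unitary_loop N A ->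
  forall i j (z : R[i]), absc z = 1 ->
  \sum_(k < (2 * N).+1) \sum_(k' < (2 * N).+1)
     (\sum_(l < n) Num.conj (A (qk k') l i) * A (qk k) l j) * z ^ (qk k - qk k') = (i == j)%:R.
Proof.
move=> hu i j z hz.
have hu' := mulmx1C (hu z hz).
have := congr1 (fun M : 'M[R[i]]_n => M i j) hu'.
rewrite !mxE => <-.
have z0 := unit_ne0 hz.
symmetry.
under eq_bigr do rewrite !mxE !loop_evalE rmorph_sum mulr_sumr.
rewrite exchange_big /=; apply: eq_bigr => k _.
under eq_bigr do rewrite mulr_suml.
rewrite exchange_big /=; apply: eq_bigr => k' _.
rewrite mulr_suml; apply: eq_bigr => l _.
rewrite rmorphM /= conj_expz conj_unit // exprz_inv (expfzDr (qk k) (- qk k') z0).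
ring.
Qed.

End Unit2.

Section Inv.
Variables (R : realType) (n : nat).

Lemma sum_kron (i : 'I_n) (F : 'I_n -> R[i]) : \sum_(j < n) (i == j)%:R * F j = F i.
Proof.
rewrite (bigD1 i) //= eqxx mul1r big1 ?addr0 // => j hj.
by rewrite eq_sym (negPf hj) mul0r.
Qed.

Lemma la_right N (A : coeffs R n) : unitary_loop N A ->
  forall x p i, loop_act N A (loop_act N (adjA A) x) p i = x p i.
Proof.
move=> hu x p i.
transitivity (\sum_(k < (2 * N).+1) \sum_(k' < (2 * N).+1) \sum_(l < n) \sum_(j < n)
   A (qk k) i l * (Num.conj (A (qk k') j l) * x (p + (qk k - qk k')) j)).
  rewrite laE; apply: eq_bigr => k _.
  under eq_bigr do rewrite laE mulr_sumr.
  rewrite exchange_big /= (reindex_inj rev_ord_inj) /=; apply: eq_bigr => k' _.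
  apply: eq_bigr => l _; rewrite mulr_sumr; apply: eq_bigr => j _.
  by rewrite /adjA mxE qk_rev opprK -addrA.
rewrite -(sum_kron i (x p)).
under [RHS]eq_bigr => j _ do rewrite -(laurent (unitH hu i j) (fun r => x r j)).
symmetry; rewrite exchange_big /=; apply: eq_bigr => k _.
rewrite exchange_big /=; apply: eq_bigr => k' _.
under eq_bigr do rewrite mulr_suml.
rewrite exchange_big /=; apply: eq_bigr => l _; apply: eq_bigr => j _.
by rewrite mulrA.
Qed.

Lemma la_left N (A : coeffs R n) : unitary_loop N A ->
  forall x p i, loop_act N (adjA A) (loop_act N A x) p i = x p i.
Proof.
move=> hu x p i.
transitivity (\sum_(k < (2 * N).+1) \sum_(k' < (2 * N).+1) \sum_(l < n) \sum_(j < n)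
   Num.conj (A (qk k') l i) * (A (qk k) l j * x (p + (qk k - qk k')) j)).
  rewrite laE (reindex_inj rev_ord_inj) /=.
  under eq_bigr => k' _ do [under eq_bigr => l _ do rewrite laE mulr_sumr; rewrite exchange_big /=].
  rewrite exchange_big /=; apply: eq_bigr => k _; apply: eq_bigr => k' _; apply: eq_bigr => l _.
  rewrite mulr_sumr; apply: eq_bigr => j _.
  rewrite /adjA mxE qk_rev opprK.
  by rewrite (_ : p + - qk k' + qk k = p + (qk k - qk k')) //; ring.
rewrite -(sum_kron i (x p)).
under [RHS]eq_bigr => j _ do rewrite -(laurent (unitH' hu i j) (fun r => x r j)).
symmetry; rewrite exchange_big /=; apply: eq_bigr => k _.
rewrite exchange_big /=; apply: eq_bigr => k' _.
under eq_bigr do rewrite mulr_suml.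
rewrite exchange_big /=; apply: eq_bigr => l _; apply: eq_bigr => j _.
by rewrite mulrA.
Qed.

End Inv.


Section G.
Variables (R : realType) (n : nat) (a : int -> R).

Definition Gop (N : nat) (t : R) (A : coeffs R n) : op R n :=
  fun x p i => (wt a t p)%:C * loop_act N A (fun r j => ((wt a t r)^-1)%:C * x r j) p i.

Definition GW (N : nat) (t : R) (A : coeffs R n) : 'I_(2 * N).+1 -> int -> 'I_n -> 'I_n -> R[i] :=
  fun k p i j => (rho a t p (qk k))%:C * A (qk k) i j.

Lemma Gop_Kop N t A : Gop N t A = Kop (@qk N) (GW t A).
Proof.
apply/funext => x; apply/funext => p; apply/funext => i.
rewrite /Gop laE /Kop mulr_sumr; apply: eq_bigr => k _.
rewrite mulr_sumr; apply: eq_bigr => j _.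
rewrite /GW /rho rmorphM /=; ring.
Qed.

Lemma Gop_inv N t (A B : coeffs R n) :
  (forall y p i, loop_act N B (loop_act N A y) p i = y p i) ->
  forall x, Gop N t B (Gop N t A x) = x.
Proof.
move=> hBA x; apply/funext => p; apply/funext => i.
rewrite /Gop.
set y := (fun r j => ((wt a t r)^-1)%:C * x r j).
have -> : (fun r j => ((wt a t r)^-1)%:C * ((wt a t r)%:C * loop_act N A y r j)) = loop_act N A y.
  apply/funext => r; apply/funext => j.
  by rewrite mulrA -rmorphM /= mulVf ?lt0r_neq0 ?wt_gt0 // mul1r.
rewrite hBA /y mulrA -rmorphM /= mulfV ?lt0r_neq0 ?wt_gt0 //.
by rewrite mul1r.
Qed.

Lemma la_succ N (A : coeffs R n) x p i : supported N A ->
  loop_act N A x p i = loop_act N.+1 A x p i.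
Proof.
move=> hs; rewrite !laE.
pose g (M k : nat) := \sum_(j < n) A (k%:Z - M%:Z) i j * x (p + (k%:Z - M%:Z)) j.
rewrite -(big_mkord xpredT (g N)) -(big_mkord xpredT (g N.+1)).
rewrite (_ : (2 * N.+1).+1 = ((2 * N).+1).+2); last by rewrite mulnS.
rewrite [RHS]big_nat_recl //= [X in _ = _ + X]big_nat_recr //=.
have z1 : g N.+1 0%N = 0.
  rewrite /g hs ?big1 // => [j _|]; first by rewrite mxE mul0r.
  rewrite sub0r normrN; lia.
have z2 : g N.+1 ((2 * N).+2) = 0.
  rewrite /g hs ?big1 // => [j _|]; first by rewrite mxE mul0r.
  lia.
rewrite z1 z2 add0r addr0; apply: eq_bigr => k _.
rewrite /g (_ : k.+1%:Z - N.+1%:Z = k%:Z - N%:Z) //; lia.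
Qed.

End G.


Section Sel.
Variables (R : realType) (n : nat).

Lemma supp_mono N M (A : coeffs R n) : supported N A -> (N <= M)%N -> supported M A.
Proof. move=> hs hNM q hq; apply: hs; lia. Qed.

Lemma la_mono N M (A : coeffs R n) : supported N A -> (N <= M)%N -> loop_act N A = loop_act M A.
Proof.
move=> hs; elim: M => [|M IH] hNM.
  by move: hNM; rewrite leqn0 => /eqP ->.
case: (ltngtP N M.+1) hNM => // [hlt|->] _.
  rewrite IH //; apply/funext => x; apply/funext => p; apply/funext => i.
  by apply: la_succ; apply: supp_mono hs _.
by [].
Qed.

Lemma la_indep N M (A : coeffs R n) : supported N A -> supported M A -> loop_act N A = loop_act M A.
Proof.
move=> hN hM.
by rewrite (la_mono hN (leq_maxl N M)) (la_mono hM (leq_maxr N M)).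
Qed.

Definition Nsel (A : coeffs R n) : nat := xget 0%N [set N | supported N A].

Lemma Nsel_ok N (A : coeffs R n) : supported N A -> loop_act (Nsel A) A = loop_act N A.
Proof.
move=> hs; apply: la_indep => //.
exact: (xgetPex 0%N (P := [set N | supported N A]) (ex_intro _ N hs)).
Qed.

Lemma Gop_N (a : int -> R) N M t (A : coeffs R n) :
  loop_act N A = loop_act M A -> Gop a N t A = Gop a M t A.
Proof. by move=> e; rewrite /Gop e. Qed.

Lemma le_big1 (I : finType) (F : I -> R) i : (forall j, 0 <= F j) -> F i <= \sum_j F j.
Proof. by move=> h; rewrite (bigD1 i) //= lerDl sumr_ge0. Qed.

Definition CA N (A : coeffs R n) : R :=
  \sum_(k < (2 * N).+1) \sum_(i < n) \sum_(j < n) absc (A (@qk N k) i j).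

Lemma CA_ge N (A : coeffs R n) (k : 'I_(2 * N).+1) i j : absc (A (qk k) i j) <= CA N A.
Proof.
have h1 : absc (A (qk k) i j) <= \sum_(j0 < n) absc (A (qk k) i j0).
  by apply: (le_big1 (F := fun j0 => absc (A (qk k) i j0))) => j0; apply: absc_ge0.
have h2 : \sum_(j0 < n) absc (A (qk k) i j0) <= \sum_(i0 < n) \sum_(j0 < n) absc (A (qk k) i0 j0).
  apply: (le_big1 (F := fun i0 => \sum_(j0 < n) absc (A (qk k) i0 j0))) => i0.
  by apply: sumr_ge0 => j0 _; apply: absc_ge0.
have h3 : \sum_(i0 < n) \sum_(j0 < n) absc (A (qk k) i0 j0) <= CA N A.
  apply: (le_big1 (F := fun k0 : 'I_(2 * N).+1 => \sum_(i0 < n) \sum_(j0 < n) absc (A (qk k0) i0 j0))) => k0.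
  by apply: sumr_ge0 => i0 _; apply: sumr_ge0 => j0 _; apply: absc_ge0.
by apply: le_trans h3; apply: le_trans h2.
Qed.

Lemma CA_ge0 N (A : coeffs R n) : 0 <= CA N A.
Proof. by apply: sumr_ge0 => k _; apply: sumr_ge0 => i _; apply: sumr_ge0 => j _; apply: absc_ge0. Qed.

End Sel.


Section Main.
Variables (R : realType) (n : nat) (a : int -> R) (M : R).
Hypothesis apos : forall p, 0 < a p.
Hypothesis asym : forall p, a (- p) = a p.
Hypothesis hM : forall p, a p / a (p + 1) <= M.

Lemma GW_bound N t (A : coeffs R n) (k : 'I_(2 * N).+1) p i j : 0 <= t <= 1 ->
  absc (GW a t A k p i j) <= expR (N%:R * lam M) * CA N A.
Proof.
move=> ht; rewrite /GW abscM absc_real ger0_norm; last exact: ltW (rho_gt0 _ _ _ _).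
apply: ler_pM; [exact: ltW (rho_gt0 _ _ _ _)|exact: absc_ge0| |exact: CA_ge].
exact: (rho_le apos asym hM _ ht (qk_bound k)).
Qed.

Lemma G_bl N t (A : coeffs R n) : 0 <= t <= 1 -> bounded_linear (Gop a N t A).
Proof.
move=> ht; rewrite Gop_Kop; apply: (@Kop_bl _ _ _ _ _ (expR (N%:R * lam M) * CA N A)).
  by rewrite mulr_ge0 ?expR_ge0 ?CA_ge0.
by move=> k p i j; apply: GW_bound.
Qed.

Lemma G_GLJ N t (A : coeffs R n) : 0 <= t <= 1 -> polyloop N A -> GLJ (Gop a N t A).
Proof.
move=> ht [hs hu]; split; first exact: G_bl.
split.
  exists (Gop a N t (adjA A)); split; first exact: G_bl.
  move=> x _; split; apply: Gop_inv; [exact: la_left | exact: la_right].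
rewrite Gop_Kop.
apply: le_lt_trans (@Kop_hsJ _ _ _ N _ _ (expR (N%:R * lam M) * CA N A) _ _ _) _.
- by rewrite mulr_ge0 ?expR_ge0 ?CA_ge0.
- by move=> k p i j; apply: GW_bound.
- exact: qk_bound.
- exact: ltry.
Qed.

Lemma G_PhiT N (A : coeffs R n) x : Gop a N 0 A x = PhiT a N A x.
Proof.
apply/funext => p; apply/funext => i; rewrite /Gop /PhiT /Tmap wt0 //.
have -> : (fun r j => ((wt a 0 r)^-1)%:C * x r j) = Tinv a x.
  by apply/funext => r; apply/funext => j; rewrite /Tinv wt0 // fmorphV.
by [].
Qed.

Lemma G_one N (A : coeffs R n) x : Gop a N 1 A x = loop_act N A x.
Proof.
apply/funext => p; apply/funext => i; rewrite /Gop wt1.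
have -> : (fun r j => ((wt a 1 r)^-1)%:C * x r j) = x.
  by apply/funext => r; apply/funext => j; rewrite wt1 invr1 rmorph1 mul1r.
by rewrite rmorph1 mul1r.
Qed.


Lemma GW_diff N t t0 (A A0 : coeffs R n) (d : R) (k : 'I_(2 * N).+1) p i j :
  0 <= t <= 1 -> 0 <= t0 <= 1 -> 0 <= d <= 1 -> `|t - t0| < d ->
  (forall q i j, absc (A q i j - A0 q i j) < d) ->
  absc (GW a t A k p i j - GW a t0 A0 k p i j) <=
  d * (expR (N%:R * lam M) * (N%:R * lam M) * (CA N A0 + 1) + expR (N%:R * lam M)).
Proof.
move=> ht ht0 /andP [d0 d1] htt hAA.
set B := expR (N%:R * lam M); set D := N%:R * lam M.
have B0 : 0 <= B by rewrite expR_ge0.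
have D0 : 0 <= D by rewrite mulr_ge0 ?lam_ge0.
set r := rho a t p (qk k); set r0 := rho a t0 p (qk k).
set x := A (qk k) i j; set x0 := A0 (qk k) i j.
have e : GW a t A k p i j - GW a t0 A0 k p i j = (r - r0)%:C * x + r0%:C * (x - x0).
  by rewrite /GW -/r -/r0 -/x -/x0 rmorphB /=; ring.
rewrite e; apply: le_trans (abscD _ _) _.
rewrite !abscM !absc_real (ger0_norm (x := r0)); last exact: ltW (rho_gt0 _ _ _ _).
have h1 : `|r - r0| <= B * (D * d).
  apply: le_trans (rho_lip apos asym hM _ ht ht0 (qk_bound k)) _.
  by rewrite -/B -/D ler_wpM2l // ler_wpM2l // ltW.
have h2 : absc x <= CA N A0 + 1.
  have -> : x = x0 + (x - x0) by ring.
  apply: le_trans (abscD _ _) _; apply: lerD; first exact: CA_ge.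
  exact: le_trans (ltW (hAA _ _ _)) d1.
have h3 : r0 <= B by exact: (rho_le apos asym hM _ ht0 (qk_bound k)).
have h4 : absc (x - x0) <= d by exact: ltW (hAA _ _ _).
have hx0 : 0 <= absc x by apply: absc_ge0.
have hxx : 0 <= absc (x - x0) by apply: absc_ge0.
have hr0 : 0 <= r0 by exact: ltW (rho_gt0 _ _ _ _).
have hCA : 0 <= CA N A0 by apply: CA_ge0.
apply: le_trans (lerD (ler_pM (normr_ge0 _) hx0 h1 h2) (ler_pM hr0 hxx h3 h4)) _.
by rewrite le_eqVlt; apply/orP; left; apply/eqP; ring.
Qed.

Lemma G_close N t0 (A0 : coeffs R n) : 0 <= t0 <= 1 ->
  forall eps : R, 0 < eps ->
  exists delta : R, 0 < delta /\
    forall (t : R) (A : coeffs R n), 0 <= t <= 1 -> `|t - t0| < delta ->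
      (forall q i j, absc (A q i j - A0 q i j) < delta) ->
      Jclose (Gop a N t A) (Gop a N t0 A0) eps.
Proof.
move=> ht0 eps heps.
set B := expR (N%:R * lam M); set D := N%:R * lam M.
have B0 : 0 <= B by rewrite expR_ge0.
have D0 : 0 <= D by rewrite mulr_ge0 ?lam_ge0.
have hCA : 0 <= CA N A0 by apply: CA_ge0.
set K0 := B * D * (CA N A0 + 1) + B.
have K00 : 0 <= K0 by apply: addr_ge0 => //; apply: mulr_ge0; [apply: mulr_ge0|apply: addr_ge0].
set m := (2 * N).+1.
set Q := (m * n)%:R ^+ 2 * 4 * n%:R * (2 * (2 * N)).+1%:R + (m * n)%:R ^+ 2 + 1 : R.
have Q0 : 0 <= (m * n)%:R ^+ 2 * 4 * n%:R * (2 * (2 * N)).+1%:R :> R by rewrite !mulr_ge0 // sqr_ge0.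
have Q1 : 0 < Q by rewrite /Q ltr_wpDl // addr_ge0 // sqr_ge0.
set E := Q * (K0 + 1) ^+ 2 + 1.
have E0 : 0 < E by rewrite /E ltr_wpDl // mulr_ge0 ?sqr_ge0 // ltW.
exists (Num.min 1 (eps / E)); split.
  by rewrite lt_min ltr01 divr_gt0.
move=> t A ht htt hAA.
set d := Num.min 1 (eps / E).
have d0 : 0 < d by rewrite lt_min ltr01 divr_gt0.
have d1 : d <= 1 by rewrite ge_min lexx.
have dE : d * E <= eps by rewrite -ler_pdivlMr // ge_min lexx orbT.
have hd : 0 <= d <= 1 by rewrite d1 ltW.
set c := d * K0.
have c0 : 0 <= c by rewrite mulr_ge0 // ltW.
have key : Q * c ^+ 2 < eps.
  apply: lt_le_trans dE.
  have : c ^+ 2 <= d * K0 ^+ 2.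
    by rewrite exprMn ler_wpM2r ?sqr_ge0 // expr2 ger_pMr // ltW.
  move=> hc; apply: le_lt_trans (ler_wpM2l (ltW Q1) hc) _.
  rewrite /E mulrCA ltr_pM2l //; apply: ltr_wpDr => //.
  have K01 : 0 <= K0 + 1 by lra.
  rewrite ltr_pM2l // ltrXn2r //; lra.
have WC : forall (k : 'I_(2 * N).+1) p i j, absc (GW a t A k p i j - GW a t0 A0 k p i j) <= c.
  by move=> k p i j; exact: (@GW_diff N t t0 A A0 d k p i j ht ht0 hd htt hAA).
rewrite /Jclose !Gop_Kop Kop_sub; split.
  apply: le_lt_trans (Kop_opnorm _ c0 WC) _; rewrite lte_fin.
  apply: le_lt_trans key; rewrite /Kc ler_wpM2r ?sqr_ge0 // /Q -/m.
  lra.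
apply: le_lt_trans (@Kop_hsJ _ _ _ N _ _ c c0 WC (@qk_bound N)) _; rewrite lte_fin.
apply: le_lt_trans key.
have -> : Kc n m (c * 2) *+ n *+ (2 * (2 * N)).+1 =
    (m * n)%:R ^+ 2 * 4 * n%:R * (2 * (2 * N)).+1%:R * c ^+ 2.
  rewrite /Kc -mulrnA -[_ *+ (n * _)]mulr_natr natrM; ring.
have X0 : 0 <= (m * n)%:R ^+ 2 :> R by apply: sqr_ge0.
rewrite /Q -/m ler_wpM2r ?sqr_ge0 //; lra.
Qed.

End Main.


Local Close Scope complex_scope.
Local Close Scope classical_set_scope.
Unset Implicit Arguments.

Theorem mainTheorem20 (R : realType) (n : nat) (a : int -> R) :
  (forall p, 0 < a p) ->
  rapidly_decreasing a ->
  (forall p, a (- p) = a p) ->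
  (exists M : R, forall p, a p / a (p + 1) <= M) ->
  exists F : R -> coeffs R n -> op R n,
    (forall (t : R) (N : nat) (A : coeffs R n),
        0 <= t <= 1 -> polyloop N A -> GLJ (F t A)) /\
    (forall (N : nat) (A : coeffs R n), polyloop N A ->
       forall x : vec R n, inl2 x ->
         F 0 A x = PhiT a N A x /\ F 1 A x = loop_act N A x) /\
    (forall (N : nat) (t0 : R) (A0 : coeffs R n),
        0 <= t0 <= 1 -> polyloop N A0 ->
        forall eps : R, 0 < eps ->
        exists delta : R, 0 < delta /\
          forall (t : R) (A : coeffs R n),
            0 <= t <= 1 -> polyloop N A -> `|t - t0| < delta ->
            (forall q i j, absc (A q i j - A0 q i j) < delta) ->
            Jclose (F t A) (F t0 A0) eps).
Proof.
move=> apos _ asym [M hM].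
exists (fun t A => Gop a (Nsel A) t A).
split.
  move=> t N A ht hA; rewrite (Gop_N a t (Nsel_ok hA.1)).
  exact: (G_GLJ apos asym hM).
split.
  move=> N A hA x _; rewrite (Gop_N a 0 (Nsel_ok hA.1)) (Gop_N a 1 (Nsel_ok hA.1)).
  split; [exact: G_PhiT | exact: G_one].
move=> N t0 A0 ht0 hA0 eps heps.
have [d [d0 H]] := G_close apos asym hM N A0 ht0 heps.
exists d; split => // t A ht hA htt hAA.
rewrite (Gop_N a t (Nsel_ok hA.1)) (Gop_N a t0 (Nsel_ok hA0.1)).
exact: H.
Qed.
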